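(* Let $\psi\in C([0,T]\times\overline{\mathcal O};\mathbb R)$ and let $u:[0,T]\times\overline{\mathcal O}\to\mathbb R$ be a bounded usc viscosity subsolution of $\mathrm{VI}_{\min}[\psi]$. Then $u(T,x)\le\psi(T,x)$ for all $x\in\overline{\mathcal O}$.
   Context: Standing assumptions: $\mathcal O\subset\mathbb R^d$ bounded open of class $W^{2,\infty}$ with outward normal $n$; $\gamma$ Lipschitz with $\gamma\cdot n\ge c_0>0$ on $\partial\mathcal O$; $b,\sigma$ continuous on $[0,T]\times\overline{\mathcal O}$, Lipschitz in space uniformly in time. $H(t,x,p)=\frac12|\sigma(t,x)^Tp|^2-b(t,x)\cdot p$. $\mathrm{VI}_{\min}[\psi]$: $\min(-\partial_tw+H(t,x,Dw),w-\psi)=0$ in $[0,T)\times\mathcal O$, $\partial w/\partial\gamma=0$ on $[0,T)\times\partial\mathcal O$, $w(T)=\psi(T)$ on $\overline{\mathcal O}$. With $E(t,x,r,q,p)=\min(-q+H(t,x,p),r-\psi(t,x))$, a bounded usc $w$ is a viscosity subsolution if for every $\varphi\in C^1([0,T]\times\overline{\mathcal O})$ and every local maximum point $(t_0,x_0)$ of $w-\varphi$, with $E_0=E(t_0,x_0,w(t_0,x_0),\partial_t\varphi(t_0,x_0),D\varphi(t_0,x_0))$: $E_0\le0$ if $x_0\in\mathcal O$ (any $t_0\in[0,T]$); $\min(E_0,D\varphi(t_0,x_0)\cdot\gamma(x_0))\le0$ if $x_0\in\partial\mathcal O$ (any $t_0\in[0,T]$). *)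

(* Defs.v *)
From mathcomp Require Import ssreflect ssrfun ssrbool eqtype ssrnat seq fintype bigop.
From Stdlib Require Import Reals.
Set Implicit Arguments. Unset Strict Implicit. Unset Printing Implicit Defensive.
Open Scope R_scope.

Definition Rd (d : nat) := 'I_d -> R.

Definition dot {d : nat} (x y : Rd d) : R := \big[Rplus/0]_(i < d) (x i * y i).
Definition vnorm {d : nat} (x : Rd d) : R := sqrt (dot x x).
Definition vsub {d : nat} (x y : Rd d) : Rd d := fun i => x i - y i.
Definition vscale {d : nat} (c : R) (x : Rd d) : Rd d := fun i => c * x i.

Definition is_open {d : nat} (O : Rd d -> Prop) : Prop :=
  forall x, O x -> exists r, 0 < r /\ forall y, vnorm (vsub y x) < r -> O y.
Definition is_bounded {d : nat} (O : Rd d -> Prop) : Prop :=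
  exists M, forall x, O x -> vnorm x <= M.
Definition closure {d : nat} (O : Rd d -> Prop) (x : Rd d) : Prop :=
  forall r, 0 < r -> exists y, O y /\ vnorm (vsub y x) < r.
Definition boundary {d : nat} (O : Rd d -> Prop) (x : Rd d) : Prop :=
  closure O x /\ ~ O x.

Definition has_grad {d : nat} (f : Rd d -> R) (x : Rd d) (g : Rd d) : Prop :=
  forall eps, 0 < eps -> exists delta, 0 < delta /\
    forall y, vnorm (vsub y x) < delta ->
      Rabs (f y - f x - dot g (vsub y x)) <= eps * vnorm (vsub y x).

Definition Lipschitz_vec {d m : nat} (f : Rd d -> Rd m) : Prop :=
  exists L, 0 <= L /\ forall x y, vnorm (vsub (f x) (f y)) <= L * vnorm (vsub x y).

(** O is a domain of class W^{2,infty} with defining function rho: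
    rho in W^{2,infty}(R^d) (bounded, with bounded Lipschitz gradient Drho),
    O = {rho < 0}, and Drho does not vanish on {rho = 0}. *)
Definition W2inf_defining {d : nat} (O : Rd d -> Prop) (rho : Rd d -> R)
  (Drho : Rd d -> Rd d) : Prop :=
  (exists M, forall x, Rabs (rho x) <= M /\ vnorm (Drho x) <= M) /\
  (forall x, has_grad rho x (Drho x)) /\
  Lipschitz_vec Drho /\
  (forall x, O x <-> rho x < 0) /\
  (forall x, rho x = 0 -> 0 < vnorm (Drho x)).

Definition W2inf_domain {d : nat} (O : Rd d -> Prop) (n : Rd d -> Rd d) : Prop :=
  exists rho Drho, W2inf_defining O rho Drho /\
    forall x, boundary O x -> n x = vscale (/ vnorm (Drho x)) (Drho x).

Definition inQ {d : nat} (T : R) (O : Rd d -> Prop) (t : R) (x : Rd d) : Prop :=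
  0 <= t <= T /\ closure O x.

Definition near {d : nat} (r t0 : R) (x0 : Rd d) (t : R) (x : Rd d) : Prop :=
  Rabs (t - t0) < r /\ vnorm (vsub x x0) < r.

Definition cont_on {d : nat} (T : R) (O : Rd d -> Prop) (f : R -> Rd d -> R) : Prop :=
  forall t0 x0, inQ T O t0 x0 -> forall eps, 0 < eps -> exists r, 0 < r /\
    forall t x, inQ T O t x -> near r t0 x0 t x -> Rabs (f t x - f t0 x0) < eps.

Definition usc_on {d : nat} (T : R) (O : Rd d -> Prop) (f : R -> Rd d -> R) : Prop :=
  forall t0 x0, inQ T O t0 x0 -> forall eps, 0 < eps -> exists r, 0 < r /\
    forall t x, inQ T O t x -> near r t0 x0 t x -> f t x < f t0 x0 + eps.

Definition bounded_on {d : nat} (T : R) (O : Rd d -> Prop) (f : R -> Rd d -> R) : Prop :=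
  exists M, forall t x, inQ T O t x -> Rabs (f t x) <= M.

Definition Lip_x_on {d k : nat} (T : R) (O : Rd d -> Prop) (f : R -> Rd d -> Rd k) : Prop :=
  exists L, 0 <= L /\ forall t x y, inQ T O t x -> inQ T O t y ->
    vnorm (vsub (f t x) (f t y)) <= L * vnorm (vsub x y).

Definition vcont_on {d k : nat} (T : R) (O : Rd d -> Prop) (f : R -> Rd d -> Rd k) : Prop :=
  forall i, cont_on T O (fun t x => f t x i).

(** C^1 test functions: phi is C^1 on R x R^d, with time derivative phit and
    spatial gradient Dphi (jointly Fréchet differentiable, continuous derivatives);
    only its restriction to [0,T] x closure(O) matters. *)
Definition C1 {d : nat} (phi : R -> Rd d -> R) (phit : R -> Rd d -> R)
  (Dphi : R -> Rd d -> Rd d) : Prop :=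
  (forall t0 x0 eps, 0 < eps -> exists delta, 0 < delta /\
     forall t x, near delta t0 x0 t x ->
       Rabs (phi t x - phi t0 x0 - phit t0 x0 * (t - t0) - dot (Dphi t0 x0) (vsub x x0))
         <= eps * (Rabs (t - t0) + vnorm (vsub x x0))) /\
  (forall t0 x0 eps, 0 < eps -> exists delta, 0 < delta /\
     forall t x, near delta t0 x0 t x ->
       Rabs (phit t x - phit t0 x0) < eps /\ vnorm (vsub (Dphi t x) (Dphi t0 x0)) < eps).

Definition loc_max {d : nat} (T : R) (O : Rd d -> Prop) (f : R -> Rd d -> R)
  (t0 : R) (x0 : Rd d) : Prop :=
  inQ T O t0 x0 /\ exists r, 0 < r /\
    forall t x, inQ T O t x -> near r t0 x0 t x -> f t x <= f t0 x0.

(** sigma(t,x) is a d x m matrix; (sigma^T p)_j = sum_i sigma_ij p_i. *)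
Definition trmul {d m : nat} (s : 'I_d -> 'I_m -> R) (p : Rd d) : Rd m :=
  fun j => \big[Rplus/0]_(i < d) (s i j * p i).

Definition Ham {d m : nat} (b : R -> Rd d -> Rd d) (sigma : R -> Rd d -> 'I_d -> 'I_m -> R)
  (t : R) (x : Rd d) (p : Rd d) : R :=
  / 2 * (vnorm (trmul (sigma t x) p)) ^ 2 - dot (b t x) p.

Definition Eop {d m : nat} (b : R -> Rd d -> Rd d) (sigma : R -> Rd d -> 'I_d -> 'I_m -> R)
  (psi : R -> Rd d -> R) (t : R) (x : Rd d) (r q : R) (p : Rd d) : R :=
  Rmin (- q + Ham b sigma t x p) (r - psi t x).

Definition VI_min_subsolution {d m : nat} (T : R) (O : Rd d -> Prop) (gamma : Rd d -> Rd d)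
  (b : R -> Rd d -> Rd d) (sigma : R -> Rd d -> 'I_d -> 'I_m -> R)
  (psi : R -> Rd d -> R) (w : R -> Rd d -> R) : Prop :=
  bounded_on T O w /\ usc_on T O w /\
  forall phi phit Dphi, C1 phi phit Dphi ->
  forall t0 x0, loc_max T O (fun t x => w t x - phi t x) t0 x0 ->
    let E0 := Eop b sigma psi t0 x0 (w t0 x0) (phit t0 x0) (Dphi t0 x0) in
    (O x0 -> E0 <= 0) /\
    (boundary O x0 -> Rmin E0 (dot (Dphi t0 x0) (gamma x0)) <= 0).

(* Main.v *)
Require Import Defs.
From HB Require Import structures.
From mathcomp Require Import ssreflect ssrfun ssrbool eqtype ssrnat seq fintype bigop.
From Stdlib Require Import Reals.
From Stdlib Require Import Lra Lia Rtopology ClassicalEpsilon Classical.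
Open Scope R_scope.
Set Implicit Arguments.
HB.instance Definition _ := Monoid.isComLaw.Build R 0 Rplus (fun a b c => esym (Rplus_assoc a b c)) Rplus_comm Rplus_0_l.

Lemma sum_le d (F G : 'I_d -> R) : (forall i, F i <= G i) ->
  \big[Rplus/0]_(i < d) F i <= \big[Rplus/0]_(i < d) G i.
Proof.
move=> H; apply: (big_ind2 (fun a b => a <= b)) => //; [lra | move=> *; lra].
Qed.

Lemma sum_const d (c : R) : \big[Rplus/0]_(i < d) c = INR d * c.
Proof.
rewrite big_const_ord; elim: d => [|d IH] /=; first lra.
rewrite IH; case: d {IH} => [|d] /=; lra.
Qed.

Lemma sum_scale d a (F : 'I_d -> R) :
  \big[Rplus/0]_(i < d) (a * F i) = a * \big[Rplus/0]_(i < d) F i.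
Proof.
apply: (big_ind2 (fun x y => x = a * y)) => //; [lra | move=> ? ? ? ? -> ->; lra].
Qed.

Lemma sum_add d (F G : 'I_d -> R) :
  \big[Rplus/0]_(i < d) (F i + G i) = \big[Rplus/0]_(i < d) F i + \big[Rplus/0]_(i < d) G i.
Proof. by rewrite big_split. Qed.

Lemma sum_ext d (F G : 'I_d -> R) : (forall i, F i = G i) ->
  \big[Rplus/0]_(i < d) F i = \big[Rplus/0]_(i < d) G i.
Proof. by move=> H; apply: eq_bigr => i _. Qed.

Lemma dot_sym d (x y : Rd d) : dot x y = dot y x.
Proof. rewrite /dot; apply: sum_ext => i; lra. Qed.

Lemma dot_lin d a (x y z : Rd d) :
  dot (fun i => a * x i + y i) z = a * dot x z + dot y z.
Proof.
rewrite /dot -sum_scale -sum_add; apply: sum_ext => i; lra.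
Qed.

Lemma dot_nonneg d (x : Rd d) : 0 <= dot x x.
Proof.
rewrite /dot; apply: Rle_trans (@sum_le d (fun _ => 0) _ _).
  by rewrite sum_const; lra.
move=> i /=; nra.
Qed.

Lemma vnorm_nonneg d (x : Rd d) : 0 <= vnorm x.
Proof. exact: sqrt_pos. Qed.

Lemma vnorm_sq d (x : Rd d) : vnorm x * vnorm x = dot x x.
Proof. rewrite /vnorm sqrt_sqrt //; exact: dot_nonneg. Qed.

Lemma coord_sq d (x : Rd d) i : x i * x i <= dot x x.
Proof.
rewrite /dot (bigD1 i) //=.
have : 0 <= \big[Rplus/0]_(j < d | j != i) (x j * x j).
  apply: (big_ind (fun a => 0 <= a)) => //; [lra| move=> *; lra| move=> *; nra].
move=> h. rewrite -[X in X <= _]Rplus_0_r. apply: Rplus_le_compat_l. exact: h.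
Qed.

Lemma coord_le d (x : Rd d) i : Rabs (x i) <= vnorm x.
Proof.
rewrite /vnorm -sqrt_Rsqr_abs; apply: sqrt_le_1_alt.
rewrite /Rsqr; exact: coord_sq.
Qed.

Lemma norm_le d (x : Rd d) c : 0 <= c -> (forall i, Rabs (x i) <= c) ->
  vnorm x <= sqrt (INR d) * c.
Proof.
move=> c0 H.
have h : dot x x <= INR d * (c * c).
  rewrite -sum_const /dot; apply: sum_le => i.
  have := H i; have := Rabs_pos (x i); move: (Rsqr_abs (x i)); rewrite /Rsqr => ->. nra.
rewrite /vnorm -(sqrt_square c) // -sqrt_mult; last nra; last exact: pos_INR.
apply: sqrt_le_1_alt; lra.
Qed.

Lemma dot_bound d (x y : Rd d) : Rabs (dot x y) <= INR d * (vnorm x * vnorm y).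
Proof.
rewrite -sum_const /dot.
apply: Rle_trans (@sum_le d (fun i => Rabs (x i * y i)) _ _).
  apply: (big_ind2 (fun a b => Rabs a <= b)) => //.
  - rewrite Rabs_R0; lra.
  - move=> a1 a2 b1 b2 h1 h2; apply: Rle_trans (Rabs_triang _ _) _; lra.
  - by move=> i; lra.
move=> i; rewrite Rabs_mult; apply: Rmult_le_compat; try exact: Rabs_pos; exact: coord_le.
Qed.

Lemma coord_sub d (x y : Rd d) i : Rabs (x i - y i) <= vnorm (vsub x y).
Proof. exact: (coord_le (vsub x y) i). Qed.


Definition incr (phi : nat -> nat) := forall k, (phi k < phi k.+1)%nat.

Lemma incr_mono phi : incr phi -> forall m n, (m <= n)%nat -> (phi m <= phi n)%nat.
Proof.
move=> h m n /subnKC <-; elim: (n - m)%nat => [|k IH]; first by rewrite addn0.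
by rewrite addnS (leq_trans IH) // ltnW.
Qed.

Lemma incr_ge phi : incr phi -> forall k, (k <= phi k)%nat.
Proof. move=> h; elim=> [|k IH] //; exact: leq_ltn_trans IH (h k). Qed.

Lemma bw1 (a : nat -> R) M : (forall k, Rabs (a k) <= M) ->
  exists phi, incr phi /\ exists l, forall eps, 0 < eps -> exists N, forall k, (N <= k)%nat ->
    Rabs (a (phi k) - l) < eps.
Proof.
move=> hM.
have [l hl] : exists l, ValAdh a l.
  apply: (Bolzano_Weierstrass a (fun c => -M <= c <= M)); first exact: compact_P3.
  move=> n; have := hM n; split_Rabs; lra.
have H : forall n N, exists p, (N <= p)%nat /\ Rabs (a p - l) < / (INR n + 1).
  move=> n N.
  have pos : 0 < / (INR n + 1) by apply: Rinv_0_lt_compat; have := pos_INR n; lra.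
  have [p [/leP hp hp2]] := hl (disc l (mkposreal _ pos)) N
    (ex_intro _ (mkposreal _ pos) (fun y hy => hy)).
  by exists p; split.
pose g n N := proj1_sig (constructive_indefinite_description _ (H n N)).
have hg n N : (N <= g n N)%nat /\ Rabs (a (g n N) - l) < / (INR n + 1).
  exact: (proj2_sig (constructive_indefinite_description _ (H n N))).
pose phi := fix phi k := match k with 0%nat => g 0%nat 0%nat | S k' => g k (S (phi k')) end.
exists phi; split.
  move=> k; exact: (proj1 (hg k.+1 (phi k).+1)).
exists l => eps he.
have [N [hN hN0]] := archimed_cor1 eps he.
exists N => k hk.
have hk' : Rabs (a (phi k) - l) < / (INR k + 1).
  case: k {hk} => [|k]; [exact: (proj2 (hg 0%nat 0%nat)) | exact: (proj2 (hg k.+1 _))].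
apply: Rlt_le_trans hk' _.
apply: Rle_trans (Rlt_le _ _ hN).
apply: Rinv_le_contravar; first by apply: lt_0_INR.
have := le_INR _ _ (elimT leP hk); lra.
Qed.

Lemma bwL (J : eqType) (c : J -> nat -> R) M (L : seq J) :
  (forall j k, Rabs (c j k) <= M) ->
  exists phi, incr phi /\ exists l : J -> R, forall eps, 0 < eps -> exists N, forall k, (N <= k)%nat ->
    forall j, j \in L -> Rabs (c j (phi k) - l j) < eps.
Proof.
move=> hM; elim: L => [|j0 L [phi [hphi [l hl]]]].
  exists (fun k : nat => k); split; first by move=> k.
  by exists (fun _ => 0) => eps _; exists 0%nat.
have [psi [hpsi [l0 hl0]]] := @bw1 (fun k => c j0 (phi k)) M (fun k => hM _ _).
exists (fun k => phi (psi k)); split.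
  move=> k; exact: leq_trans (hphi (psi k)) (incr_mono hphi _ _ (hpsi k)).
exists (fun j => if j == j0 then l0 else l j) => eps he.
have [N1 h1] := hl eps he; have [N2 h2] := hl0 eps he.
exists (maxn N1 N2) => k hk j.
rewrite in_cons; case: eqP => [-> _|_ /= hj].
  apply: h2; exact: leq_trans (leq_maxr _ _) hk.
apply: h1 => //; apply: leq_trans (incr_ge hpsi k).
exact: leq_trans (leq_maxl _ _) hk.
Qed.


Lemma le_eps a b : (forall e, 0 < e -> a <= b + e) -> a <= b.
Proof.
move=> h; apply: Rnot_lt_le => hlt.
have := h ((a - b) / 2); lra.
Qed.

Lemma frac_lt s r : 0 <= s -> 0 < r -> s * (r / (s + 1)) < r.
Proof.
move=> hs hr; have -> : s * (r / (s+1)) = r - r / (s+1) by field; lra.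
have : 0 < r / (s+1) by apply: Rdiv_lt_0_compat; lra.
lra.
Qed.

Lemma frac_lt' s r : 0 <= s -> 0 < r -> r / (s + 1) <= r.
Proof.
move=> hs hr.
have : 0 < r / (s+1) by apply: Rdiv_lt_0_compat; lra.
have : r = r / (s+1) * (s + 1) by field; lra.
set q := r / (s+1); nra.
Qed.

Lemma sqrt_d_pos d : 0 <= sqrt (INR d).
Proof. exact: sqrt_pos. Qed.

Lemma max_exists d T (O : Rd d -> Prop) (f : R -> Rd d -> R) (M : R) (t0 : R) (x0 : Rd d) :
  is_bounded O -> inQ T O t0 x0 -> usc_on T O f ->
  (forall t x, inQ T O t x -> f t x <= M) ->
  exists t1 x1, inQ T O t1 x1 /\ forall t x, inQ T O t x -> f t x <= f t1 x1.
Proof.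
move=> [R0 hR0] hQ0 husc hM.
pose E v := exists t x, inQ T O t x /\ v = f t x.
have [S [hS1 hS2]] : {S | is_lub E S}.
  apply: completeness.
    by exists M => v [t [x [h ->]]]; apply: hM.
  by exists (f t0 x0); exists t0, x0.
have H k : exists p : R * Rd d, inQ T O p.1 p.2 /\ S - / (INR k + 1) < f p.1 p.2.
  have pos : 0 < / (INR k + 1) by apply: Rinv_0_lt_compat; have := pos_INR k; lra.
  apply: NNPP => hn.
  have : S <= S - / (INR k + 1); last lra.
  apply: hS2 => v [t [x [h ->]]].
  apply: Rnot_lt_le => hl; apply: hn; exists (t, x); split => //.
pose p k := proj1_sig (constructive_indefinite_description _ (H k)).
have hp k : inQ T O (p k).1 (p k).2 /\ S - / (INR k + 1) < f (p k).1 (p k).2.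
  exact: (proj2_sig (constructive_indefinite_description _ (H k))).
pose c (j : option 'I_d) k := match j with None => (p k).1 | Some i => (p k).2 i end.
have hc j k : Rabs (c j k) <= Rabs T + Rabs R0 + 1.
  case: (hp k) => [[[h1 h2] hcl] _].
  case: j => [i|] /=; last by split_Rabs; lra.
  have [y [hy1 hy2]] := hcl 1 Rlt_0_1.
  have := hR0 y hy1; have := coord_sub y (p k).2 i; have := coord_le y i.
  split_Rabs; lra.
have [phi [hphi [l hl]]] := @bwL _ c _ (None :: map Some (enum 'I_d)) hc.
have memS i : Some i \in None :: map Some (enum 'I_d).
  by rewrite in_cons /= map_f // mem_enum.
have mem0 : None \in None :: map Some (enum 'I_d) by rewrite in_cons.
pose ts := l None; pose xs : Rd d := fun i => l (Some i).
set s := sqrt (INR d).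
have s0 : 0 <= s := sqrt_pos _.
have approx : forall eps, 0 < eps -> exists N, forall k, (N <= k)%nat ->
   Rabs ((p (phi k)).1 - ts) < eps /\ forall i, Rabs ((p (phi k)).2 i - xs i) < eps.
  move=> eps he; have [N hN] := hl eps he; exists N => k hk; split.
    exact: (hN k hk None mem0).
  move=> i; exact: (hN k hk (Some i) (memS i)).
have hQs : inQ T O ts xs.
  split; first split.
  - apply: le_eps => e he; have [N hN] := approx e he.
    case: (hN N (leqnn N)) => h1 _; case: (hp (phi N)) => [[[h2 h3] _] _].
    move: h1; split_Rabs; lra.
  - apply: le_eps => e he; have [N hN] := approx e he.
    case: (hN N (leqnn N)) => h1 _; case: (hp (phi N)) => [[[h2 h3] _] _].
    move: h1; split_Rabs; lra.
  - move=> r hr.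
    pose e := r / (2 * (s + 1)).
    have he : 0 < e by rewrite /e; apply: Rdiv_lt_0_compat; lra.
    have [N hN] := approx e he.
    case: (hN N (leqnn N)) => _ h1; case: (hp (phi N)) => [[_ hcl] _].
    have [y [hy1 hy2]] := hcl e he.
    exists y; split => //.
    apply: Rle_lt_trans (norm_le _ (c := 2 * e) _ _) _; first lra.
      move=> i; have := coord_sub y (p (phi N)).2 i; have := h1 i.
      change (vsub y xs i) with (y i - xs i); split_Rabs; lra.
    rewrite -/s /e; have -> : s * (2 * (r / (2 * (s + 1)))) = s * (r / (s+1)) by field; lra.
    exact: frac_lt.
exists ts, xs; split => //.
move=> t x hQ.
apply: Rle_trans (_ : S <= _); first by apply: hS1; exists t, x.
apply: le_eps => eta heta.
have [r [hr hu]] := husc ts xs hQs (eta / 2) ltac:(lra).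
pose e := r / (s + 1).
have he : 0 < e by rewrite /e; apply: Rdiv_lt_0_compat; lra.
have [N1 hN1] := approx e he.
have [N2 [hN2 hN2']] := archimed_cor1 (eta / 2) ltac:(lra).
pose k := maxn N1 N2.
case: (hN1 k (leq_maxl _ _)) => h1 h2.
case: (hp (phi k)) => hQk hfk.
have hnear : near r ts xs (p (phi k)).1 (p (phi k)).2.
  split.
    apply: Rlt_le_trans h1 _; rewrite /e; apply: frac_lt' => //.
  apply: Rle_lt_trans (norm_le _ (c := e) _ _) _; first lra.
    by move=> i; apply: Rlt_le; exact: h2.
  rewrite -/s /e; exact: frac_lt.
have := hu _ _ hQk hnear.
have : / (INR (phi k) + 1) <= / INR N2.
  apply: Rinv_le_contravar; first by apply: lt_0_INR.
  have : (N2 <= phi k)%nat.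
    apply: leq_trans (leq_maxr N1 N2) (incr_ge hphi k).
  move/leP/le_INR; lra.
lra.
Qed.


Lemma sum_sub d (F G : 'I_d -> R) :
  \big[Rplus/0]_(i < d) F i - \big[Rplus/0]_(i < d) G i = \big[Rplus/0]_(i < d) (F i - G i).
Proof.
have -> : \big[Rplus/0]_(i < d) (F i - G i) = \big[Rplus/0]_(i < d) (F i + (-1) * G i).
  by apply: sum_ext => i; ring.
rewrite sum_add sum_scale; ring.
Qed.

Lemma quad_id d (x0 x y : Rd d) :
  dot (vsub y x0) (vsub y x0) - dot (vsub x x0) (vsub x x0)
  - dot (fun i => 2 * (x i - x0 i)) (vsub y x) = dot (vsub y x) (vsub y x).
Proof. rewrite /dot !sum_sub; apply: sum_ext => i; rewrite /vsub; ring. Qed.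

Lemma dot_lin2 d a b (u w z : Rd d) :
  dot (fun i => a * u i + b * w i) z = a * dot u z + b * dot w z.
Proof. rewrite /dot -!sum_scale -sum_add; apply: sum_ext => i; ring. Qed.

Lemma C1_cont d (phi : R -> Rd d -> R) phit Dphi : Defs.C1 phi phit Dphi ->
  forall t0 x0 eps, 0 < eps -> exists r, 0 < r /\ forall t x, near r t0 x0 t x ->
    Rabs (phi t x - phi t0 x0) < eps.
Proof.
move=> [h1 _] t0 x0 eps he.
have [del [hdel hd]] := h1 t0 x0 1 Rlt_0_1.
have hP := Rabs_pos (phit t0 x0).
have hD : 0 <= INR d * vnorm (Dphi t0 x0).
  apply: Rmult_le_pos; [exact: pos_INR | exact: vnorm_nonneg].
pose C := Rabs (phit t0 x0) + INR d * vnorm (Dphi t0 x0) + 1.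
have hC : 1 <= C by rewrite /C; lra.
pose e := eps / (2 * C + 1).
have he0 : 0 < e by apply: Rdiv_lt_0_compat; lra.
have heC : 2 * C * e < eps.
  have -> : 2 * C * e = eps - e by rewrite /e; field; lra.
  lra.
exists (Rmin del e); split; first exact: Rmin_glb_lt.
move=> t x [ht hx].
have hr1 := Rmin_l del e; have hr2 := Rmin_r del e.
have hrem := hd t x (conj (Rlt_le_trans _ _ _ ht hr1) (Rlt_le_trans _ _ _ hx hr1)).
have hdb := dot_bound (Dphi t0 x0) (vsub x x0).
have hv := vnorm_nonneg (vsub x x0).
have hab := Rabs_pos (t - t0).
have hm : Rabs (phit t0 x0 * (t - t0)) = Rabs (phit t0 x0) * Rabs (t - t0) by rewrite Rabs_mult.
have hm2 : INR d * (vnorm (Dphi t0 x0) * vnorm (vsub x x0)) = (INR d * vnorm (Dphi t0 x0)) * vnorm (vsub x x0) by ring.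
have h3 : Rabs (phi t x - phi t0 x0) <= C * (Rabs (t - t0) + vnorm (vsub x x0)).
  have : Rabs (phit t0 x0) * Rabs (t - t0) + (INR d * vnorm (Dphi t0 x0)) * vnorm (vsub x x0) + 1 * (Rabs (t - t0) + vnorm (vsub x x0)) <= C * (Rabs (t - t0) + vnorm (vsub x x0)).
    rewrite /C; nra.
  move: hrem hdb; rewrite hm2 -hm; split_Rabs; lra.
have : C * (Rabs (t - t0) + vnorm (vsub x x0)) <= C * (2 * e) by apply: Rmult_le_compat_l; lra.
lra.
Qed.

Lemma phi_C1 d (x0 : Rd d) (rho : Rd d -> R) (Drho : Rd d -> Rd d) (A lam K T : R) :
  0 <= A -> 0 <= lam -> (forall x, has_grad rho x (Drho x)) -> Lipschitz_vec Drho ->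
  Defs.C1 (fun t x => A * dot (vsub x x0) (vsub x x0) + lam * rho x + K * (T - t))
     (fun _ _ => - K) (fun _ x i => A * (2 * (x i - x0 i)) + lam * Drho x i).
Proof.
move=> hA hl hg [L [hL hLip]]; split.
  move=> t0 xa eps he.
  pose e1 := eps / (2 * (lam + 1)); pose e2 := eps / (2 * (A + 1)).
  have he1 : 0 < e1 by apply: Rdiv_lt_0_compat; lra.
  have he2 : 0 < e2 by apply: Rdiv_lt_0_compat; lra.
  have [del [hdel hd]] := hg xa e1 he1.
  exists (Rmin del e2); split; first exact: Rmin_glb_lt.
  move=> t x [ht hx].
  have hx1 := Rlt_le_trans _ _ _ hx (Rmin_l del e2).
  have hx2 := Rlt_le_trans _ _ _ hx (Rmin_r del e2).
  have hR := hd x hx1.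
  have -> : dot (fun i => A * (2 * (xa i - x0 i)) + lam * Drho xa i) (vsub x xa)
     = A * dot (fun i => 2 * (xa i - x0 i)) (vsub x xa) + lam * dot (Drho xa) (vsub x xa).
    exact: dot_lin2.
  have hq := quad_id x0 xa x; rewrite -(vnorm_sq (vsub x xa)) in hq.
  have hv := vnorm_nonneg (vsub x xa).
  set v := vnorm (vsub x xa) in hq hv hx1 hx2 hR *.
  set Rr := rho x - rho xa - dot (Drho xa) (vsub x xa) in hR.
  have -> : A * dot (vsub x x0) (vsub x x0) + lam * rho x + K * (T - t) -
      (A * dot (vsub xa x0) (vsub xa x0) + lam * rho xa + K * (T - t0)) - - K * (t - t0) -
      (A * dot (fun i => 2 * (xa i - x0 i)) (vsub x xa) + lam * dot (Drho xa) (vsub x xa))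
      = A * (v * v) + lam * Rr.
    rewrite -hq /Rr; ring.
  have h1 : A * (v * v) <= eps / 2 * v.
    have : A * v <= A * e2 by apply: Rmult_le_compat_l; lra.
    have : A * e2 <= eps / 2.
      rewrite /e2; have -> : A * (eps / (2 * (A + 1))) = eps / 2 * (A / (A + 1)) by field; lra.
      have : A / (A + 1) <= 1.
        have : 0 < A + 1 by lra.
        move=> h; apply: (Rmult_le_reg_r (A + 1)) => //; rewrite /Rdiv Rmult_assoc Rinv_l; lra.
      have : 0 <= eps / 2 by lra.
      nra.
    nra.
  have h2 : lam * Rabs Rr <= eps / 2 * v.
    have : lam * Rabs Rr <= lam * (e1 * v) by apply: Rmult_le_compat_l.
    have : lam * e1 <= eps / 2.
      rewrite /e1; have -> : lam * (eps / (2 * (lam + 1))) = eps / 2 * (lam / (lam + 1)) by field; lra.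
      have : lam / (lam + 1) <= 1.
        have : 0 < lam + 1 by lra.
        move=> h; apply: (Rmult_le_reg_r (lam + 1)) => //; rewrite /Rdiv Rmult_assoc Rinv_l; lra.
      have : 0 <= eps / 2 by lra.
      nra.
    nra.
  have hab := Rabs_pos (t - t0).
  have : Rabs (A * (v * v) + lam * Rr) <= A * (v * v) + lam * Rabs Rr.
    apply: Rle_trans (Rabs_triang _ _) _.
    have hAv : 0 <= A * (v * v) by nra.
    rewrite (Rabs_right (A * (v * v))); last lra.
    rewrite Rabs_mult (Rabs_right lam); last lra.
    lra.
  nra.
move=> t0 xa eps he.
set s := sqrt (INR d).
have hs : 0 <= s := sqrt_pos _.
set cc := 2 * A + lam * L.
have hcc : 0 <= cc by rewrite /cc; nra.
have hsc : 0 <= s * cc by nra.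
exists (eps / (s * cc + 1)); split; first by apply: Rdiv_lt_0_compat; lra.
move=> t x [ht hx]; split; first by rewrite Rminus_diag Rabs_R0.
have hv := vnorm_nonneg (vsub x xa).
apply: Rle_lt_trans (norm_le _ (c := cc * vnorm (vsub x xa)) _ _) _.
- nra.
- move=> i; change (Rabs ((A * (2 * (x i - x0 i)) + lam * Drho x i) - (A * (2 * (xa i - x0 i)) + lam * Drho xa i)) <= cc * vnorm (vsub x xa)).
  have h1 := coord_sub x xa i.
  have h2 := coord_sub (Drho x) (Drho xa) i.
  have h3 := hLip x xa.
  have -> : (A * (2 * (x i - x0 i)) + lam * Drho x i) - (A * (2 * (xa i - x0 i)) + lam * Drho xa i)
     = (2 * A) * (x i - xa i) + lam * (Drho x i - Drho xa i) by ring.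
  apply: Rle_trans (Rabs_triang _ _) _.
  rewrite (Rabs_mult (2 * A)) (Rabs_mult lam) (Rabs_right (2 * A)); last lra.
  rewrite (Rabs_right lam); last lra.
  rewrite /cc; nra.
- rewrite -/s.
  have : s * (cc * vnorm (vsub x xa)) <= (s * cc) * (eps / (s * cc + 1)).
    rewrite -Rmult_assoc; apply: Rmult_le_compat_l => //; lra.
  have := frac_lt hsc he; lra.
Qed.


Lemma dot_scale_r d c (x y : Rd d) : dot x (vscale c y) = c * dot x y.
Proof. rewrite /dot -sum_scale; apply: sum_ext => i; rewrite /vscale; ring. Qed.

Lemma dot_zero d (x : Rd d) : dot (vsub x x) (vsub x x) = 0.
Proof.
rewrite /dot (@sum_ext d _ (fun _ => 0)); first by rewrite sum_const; ring.
move=> i; rewrite /vsub; ring.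
Qed.

Lemma fin_rad d (P : 'I_d -> R -> Prop) :
  (forall i r r', P i r -> 0 < r' -> r' <= r -> P i r') ->
  (forall i, exists r, 0 < r /\ P i r) -> exists r, 0 < r /\ forall i, P i r.
Proof.
move=> hmono hex.
suff : forall L : seq 'I_d, exists r, 0 < r /\ forall i, i \in L -> P i r.
  by move=> /(_ (enum 'I_d)) [r [hr h]]; exists r; split => // i; apply: h; rewrite mem_enum.
elim=> [|j L [r [hr h]]]; first by exists 1; split => //; lra.
have [r' [hr' h']] := hex j.
exists (Rmin r r'); split; first exact: Rmin_glb_lt.
move=> i; rewrite in_cons; case: eqP => [-> _|_ /= hi].
  apply: hmono h' _ (Rmin_r _ _); exact: Rmin_glb_lt.
apply: hmono (h i hi) _ (Rmin_l _ _); exact: Rmin_glb_lt.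
Qed.

Lemma rho_closure d (O : Rd d -> Prop) (rho : Rd d -> R) (Drho : Rd d -> Rd d) x :
  (forall x, has_grad rho x (Drho x)) -> (forall x, O x <-> rho x < 0) ->
  closure O x -> rho x <= 0.
Proof.
move=> hg hO hcl; apply: Rnot_lt_le => hpos.
have [del [hdel hd]] := hg x 1 Rlt_0_1.
pose C := INR d * vnorm (Drho x) + 1.
have hC : 1 <= C.
  rewrite /C; have := pos_INR d; have := vnorm_nonneg (Drho x); nra.
pose e := Rmin del (rho x / (C + 1)).
have he : 0 < e by apply: Rmin_glb_lt => //; apply: Rdiv_lt_0_compat; lra.
have [y [hy1 hy2]] := hcl e he.
have hy3 := (proj1 (hO y)) hy1.
have := hd y (Rlt_le_trans _ _ _ hy2 (Rmin_l _ _)).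
have := dot_bound (Drho x) (vsub y x).
have := vnorm_nonneg (vsub y x).
have hv : vnorm (vsub y x) <= rho x / (C + 1) by apply: Rlt_le; apply: Rlt_le_trans hy2 (Rmin_r _ _).
have hk : C * (rho x / (C + 1)) < rho x.
  have -> : C * (rho x / (C + 1)) = rho x - rho x / (C + 1) by field; lra.
  have : 0 < rho x / (C + 1) by apply: Rdiv_lt_0_compat; lra.
  lra.
move=> h0 hdb hrem.
have : C * vnorm (vsub y x) <= C * (rho x / (C + 1)) by apply: Rmult_le_compat_l; lra.
have : INR d * (vnorm (Drho x) * vnorm (vsub y x)) = (C - 1) * vnorm (vsub y x) by rewrite /C; ring.
move: hrem hdb; split_Rabs; nra.
Qed.

Lemma Ham_lb d m (b : R -> Rd d -> Rd d) (sigma : R -> Rd d -> 'I_d -> 'I_m -> R) t x p :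
  - (INR d * (vnorm (b t x) * vnorm p)) <= Ham b sigma t x p.
Proof.
rewrite /Ham; have := dot_bound (b t x) p.
have : 0 <= / 2 * vnorm (trmul (sigma t x) p) ^ 2.
  apply: Rmult_le_pos; first lra; apply: pow2_ge_0.
split_Rabs; lra.
Qed.

Lemma key_bd d (O : Rd d -> Prop) (n gamma : Rd d -> Rd d) c0 (Drho : Rd d -> Rd d) x0 :
  Lipschitz_vec gamma -> 0 < c0 -> (forall x, boundary O x -> c0 <= dot (gamma x) (n x)) ->
  (forall x, boundary O x -> n x = vscale (/ vnorm (Drho x)) (Drho x)) ->
  Lipschitz_vec Drho -> 0 < vnorm (Drho x0) ->
  exists r0, 0 < r0 /\ r0 <= 1 /\ forall A, 0 <= A -> exists lam, 0 <= lam /\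
    forall x1, vnorm (vsub x1 x0) < r0 -> boundary O x1 ->
      0 < dot (fun i => A * (2 * (x1 i - x0 i)) + lam * Drho x1 i) (gamma x1).
Proof.
move=> [Lg [hLg hgL]] hc0 hgn hn [L [hL hLip]] hD0.
have [i0 hi0] : exists i0, 0 < Rabs (Drho x0 i0).
  apply: NNPP => hne.
  have : vnorm (Drho x0) <= sqrt (INR d) * 0.
    apply: norm_le; first lra.
    move=> i; apply: Rnot_lt_le => h; apply: hne; exists i.
    have := Rabs_pos (Drho x0 i); lra.
  lra.
set a0 := Rabs (Drho x0 i0) in hi0.
set s := sqrt (INR d).
have hs : 0 <= s := sqrt_pos _.
pose r0 := Rmin 1 (a0 / (2 * (L + 1))).
have hr0 : 0 < r0 by apply: Rmin_glb_lt; [lra | apply: Rdiv_lt_0_compat; lra].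
exists r0; split => //; split; first exact: Rmin_l.
move=> A hA.
pose G := vnorm (gamma x0) + Lg.
have hG : 0 <= G by rewrite /G; have := vnorm_nonneg (gamma x0); lra.
pose Cg := A * (INR d * ((s * 2) * (s * G))).
have hCg : 0 <= Cg.
  rewrite /Cg; apply: Rmult_le_pos => //; apply: Rmult_le_pos; first exact: pos_INR.
  apply: Rmult_le_pos; nra.
exists ((Cg + 1) / (c0 * (a0 / 2))); split.
  apply: Rlt_le; apply: Rdiv_lt_0_compat; nra.
move=> x1 hx1 hb1.
have hx1a : vnorm (vsub x1 x0) < 1 by apply: Rlt_le_trans hx1 (Rmin_l _ _).
have hx1b : vnorm (vsub x1 x0) < a0 / (2 * (L + 1)) by apply: Rlt_le_trans hx1 (Rmin_r _ _).
have hv := vnorm_nonneg (vsub x1 x0).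
have hD1 : a0 / 2 <= vnorm (Drho x1).
  apply: Rle_trans (coord_le (Drho x1) i0).
  have h1 := coord_sub (Drho x1) (Drho x0) i0.
  have h2 := hLip x1 x0.
  have h3 : L * vnorm (vsub x1 x0) <= L * (a0 / (2 * (L + 1))) by apply: Rmult_le_compat_l; lra.
  have h4 : L * (a0 / (2 * (L + 1))) <= a0 / 2.
    have -> : L * (a0 / (2 * (L + 1))) = a0 / 2 - a0 / (2 * (L + 1)) by field; lra.
    have : 0 < a0 / (2 * (L + 1)) by apply: Rdiv_lt_0_compat; lra.
    lra.
  move: h1; have : a0 = Rabs (Drho x0 i0) by []; split_Rabs; lra.
have hDpos : 0 < vnorm (Drho x1) by lra.
have hdg : c0 * vnorm (Drho x1) <= dot (Drho x1) (gamma x1).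
  have := hgn x1 hb1; rewrite (hn x1 hb1) dot_scale_r dot_sym => h.
  have := Rmult_le_compat_l (vnorm (Drho x1)) _ _ (Rlt_le _ _ hDpos) h.
  rewrite -Rmult_assoc Rinv_r; last lra.
  lra.
have hq : Rabs (A * dot (fun i => 2 * (x1 i - x0 i)) (gamma x1)) <= Cg.
  rewrite Rabs_mult (Rabs_right A); last lra.
  apply: Rmult_le_compat_l => //.
  apply: Rle_trans (dot_bound _ _) _.
  apply: Rmult_le_compat_l; first exact: pos_INR.
  apply: Rmult_le_compat; try exact: vnorm_nonneg.
  - apply: Rle_trans (norm_le _ (c := 2) _ _) _; first lra.
      move=> i; have := coord_sub x1 x0 i; rewrite Rabs_mult (Rabs_right 2); lra.
    rewrite -/s; lra.
  - apply: norm_le => //.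
    move=> i; have := coord_sub (gamma x1) (gamma x0) i; have := coord_le (gamma x0) i.
    have := hgL x1 x0.
    have : Lg * vnorm (vsub x1 x0) <= Lg by nra.
    rewrite /G; split_Rabs; lra.
rewrite (dot_lin2 A ((Cg + 1) / (c0 * (a0 / 2))) (fun i => 2 * (x1 i - x0 i)) (Drho x1)).
have hlam : (Cg + 1) / (c0 * (a0 / 2)) * (c0 * (a0 / 2)) = Cg + 1 by field; lra.
have hl0 : 0 <= (Cg + 1) / (c0 * (a0 / 2)) by apply: Rlt_le; apply: Rdiv_lt_0_compat; nra.
have : (Cg + 1) / (c0 * (a0 / 2)) * (c0 * (a0 / 2)) <= (Cg + 1) / (c0 * (a0 / 2)) * dot (Drho x1) (gamma x1).
  apply: Rmult_le_compat_l => //; nra.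
move: hq; split_Rabs; lra.
Qed.


Lemma cos_cont a eps : 0 < eps -> exists del, 0 < del /\ forall b, Rabs (b - a) < del ->
  Rabs (cos b - cos a) < eps.
Proof.
move=> he; have [alp [halp H]] := continuity_cos a eps he.
exists alp; split => // b hb.
case: (Req_dec b a) => [->|hne]; first by rewrite Rminus_diag Rabs_R0.
exact: (H b (conj (conj I (not_eq_sym hne)) hb)).
Qed.

Lemma sin_taylor a eps : 0 < eps -> exists del, 0 < del /\ forall h, Rabs h < del ->
  Rabs (sin (a + h) - sin a - cos a * h) <= eps * Rabs h.
Proof.
move=> he; have [del H] := derivable_pt_lim_sin a eps he.
exists del; split; first exact: cond_pos.
move=> h hh; case: (Req_dec h 0) => [->|hne].
  by rewrite Rplus_0_r Rminus_diag Rmult_0_r Rminus_0_r Rabs_R0; lra.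
have := H h hne hh.
have -> : (sin (a + h) - sin a) / h - cos a = (sin (a + h) - sin a - cos a * h) / h by field.
rewrite /Rdiv Rabs_mult Rabs_inv => h1.
have hp : 0 < Rabs h by apply: Rabs_pos_lt.
have := Rmult_lt_compat_r (Rabs h) _ _ hp h1.
rewrite Rmult_assoc Rinv_l; lra.
Qed.

Lemma grad_lip d (f : Rd d -> R) x g : has_grad f x g ->
  exists C del, 1 <= C /\ 0 < del /\ forall y, vnorm (vsub y x) < del ->
    Rabs (f y - f x) <= C * vnorm (vsub y x).
Proof.
move=> hg; have [del [hdel hd]] := hg 1 Rlt_0_1.
exists (INR d * vnorm g + 1), del; split.
  have := pos_INR d; have := vnorm_nonneg g; nra.
split => // y hy.
have := hd y hy; have := dot_bound g (vsub y x).
have := vnorm_nonneg (vsub y x).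
move=> h0 h1 h2.
have : INR d * (vnorm g * vnorm (vsub y x)) = INR d * vnorm g * vnorm (vsub y x) by ring.
move: h1 h2; split_Rabs; nra.
Qed.

Lemma dot_scale_l d c (x y : Rd d) : dot (fun i => c * x i) y = c * dot x y.
Proof. rewrite /dot -sum_scale; apply: sum_ext => i; ring. Qed.

Lemma G_grad d (rho : Rd d -> R) (Drho : Rd d -> Rd d) e :
  0 < e -> (forall x, has_grad rho x (Drho x)) ->
  forall x, has_grad (fun y => e * sin (rho y / e)) x (fun i => cos (rho x / e) * Drho x i).
Proof.
move=> he hg x eps heps.
have [C [del1 [hC [hdel1 hlip]]]] := grad_lip (hg x).
set a := rho x / e.
pose e1 := eps / (2 * (C + 1)).
have he1 : 0 < e1 by apply: Rdiv_lt_0_compat; nra.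
have [del2 [hdel2 hsin]] := sin_taylor a he1.
have [del3 [hdel3 hd]] := hg x (eps / 2) ltac:(lra).
exists (Rmin (Rmin del1 del3) (del2 * e / C)); split.
  repeat apply: Rmin_glb_lt => //; apply: Rdiv_lt_0_compat; nra.
move=> y hy.
have hy1 : vnorm (vsub y x) < del1 by apply: Rlt_le_trans hy _; apply: Rle_trans (Rmin_l _ _) (Rmin_l _ _).
have hy3 : vnorm (vsub y x) < del3 by apply: Rlt_le_trans hy _; apply: Rle_trans (Rmin_l _ _) (Rmin_r _ _).
have hy2 : vnorm (vsub y x) < del2 * e / C by apply: Rlt_le_trans hy (Rmin_r _ _).
set v := vnorm (vsub y x) in hy hy1 hy2 hy3 *.
have hv : 0 <= v := vnorm_nonneg _.
set h := (rho y - rho x) / e.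
have hh : Rabs h <= C * v / e.
  rewrite /h /Rdiv Rabs_mult Rabs_inv.
  rewrite (Rabs_right e); last lra.
  apply: Rmult_le_compat_r; last exact: hlip.
  apply: Rlt_le; apply: Rinv_0_lt_compat; lra.
have hh2 : Rabs h < del2.
  apply: Rle_lt_trans hh _.
  have : C * v < C * (del2 * e / C) by apply: Rmult_lt_compat_l; lra.
  have -> : C * (del2 * e / C) = del2 * e by field; lra.
  move=> h1; apply: (Rmult_lt_reg_r e) => //.
  have -> : C * v / e * e = C * v by field; lra.
  lra.
have hs := hsin h hh2.
have hr := hd y hy3; rewrite -/v in hr.
rewrite dot_scale_l.
have -> : rho y / e = a + h by rewrite /a /h; field; lra.
have -> : e * sin (a + h) - e * sin a - cos a * dot (Drho x) (vsub y x)
   = e * (sin (a + h) - sin a - cos a * h) + cos a * (rho y - rho x - dot (Drho x) (vsub y x)).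
  rewrite /h; field; lra.
apply: Rle_trans (Rabs_triang _ _) _.
rewrite !Rabs_mult (Rabs_right e); last lra.
have hc : Rabs (cos a) <= 1 by have := COS_bound a; split_Rabs; lra.
have t1 : e * Rabs (sin (a + h) - sin a - cos a * h) <= e * (e1 * (C * v / e)).
  apply: Rmult_le_compat_l; first lra.
  apply: Rle_trans hs _; apply: Rmult_le_compat_l; lra.
have t2 : e * (e1 * (C * v / e)) <= eps / 2 * v.
  have -> : e * (e1 * (C * v / e)) = (C * e1) * v by field; lra.
  apply: Rmult_le_compat_r => //.
  rewrite /e1; have -> : C * (eps / (2 * (C + 1))) = eps / 2 * (C / (C + 1)) by field; nra.
  have : C / (C + 1) <= 1.
    apply: (Rmult_le_reg_r (C + 1)); first nra.
    rewrite /Rdiv Rmult_assoc Rinv_l; nra.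
  nra.
have t3 : Rabs (cos a) * Rabs (rho y - rho x - dot (Drho x) (vsub y x)) <= eps / 2 * v.
  have : Rabs (cos a) * Rabs (rho y - rho x - dot (Drho x) (vsub y x)) <= 1 * Rabs (rho y - rho x - dot (Drho x) (vsub y x)).
    apply: Rmult_le_compat_r => //; exact: Rabs_pos.
  lra.
lra.
Qed.

Lemma G_cont d (rho : Rd d -> R) (Drho : Rd d -> Rd d) e Mr :
  0 < e -> (forall x, has_grad rho x (Drho x)) -> Lipschitz_vec Drho ->
  (forall x, vnorm (Drho x) <= Mr) ->
  forall x eps, 0 < eps -> exists del, 0 < del /\ forall y, vnorm (vsub y x) < del ->
    vnorm (vsub (fun i => cos (rho y / e) * Drho y i) (fun i => cos (rho x / e) * Drho x i)) < eps.
Proof.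
move=> he hg [L [hL hLip]] hMr x eps heps.
have hMr0 : 0 <= Mr by have := hMr x; have := vnorm_nonneg (Drho x); lra.
set s := sqrt (INR d).
have hs : 0 <= s := sqrt_pos _.
have [C [del1 [hC [hdel1 hlip]]]] := grad_lip (hg x).
pose eta := eps / (2 * (s * Mr + 1)).
have heta : 0 < eta by apply: Rdiv_lt_0_compat; nra.
have [dc [hdc hcos]] := cos_cont (rho x / e) heta.
pose d2 := eps / (2 * (s * L + 1)).
have hd2 : 0 < d2 by apply: Rdiv_lt_0_compat; nra.
exists (Rmin (Rmin del1 d2) (dc * e / C)); split.
  repeat apply: Rmin_glb_lt => //; apply: Rdiv_lt_0_compat; nra.
move=> y hy.
have hy1 : vnorm (vsub y x) < del1 by apply: Rlt_le_trans hy _; apply: Rle_trans (Rmin_l _ _) (Rmin_l _ _).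
have hy2 : vnorm (vsub y x) < d2 by apply: Rlt_le_trans hy _; apply: Rle_trans (Rmin_l _ _) (Rmin_r _ _).
have hy3 : vnorm (vsub y x) < dc * e / C by apply: Rlt_le_trans hy (Rmin_r _ _).
set v := vnorm (vsub y x) in hy hy1 hy2 hy3 *.
have hv : 0 <= v := vnorm_nonneg _.
have hba : Rabs (rho y / e - rho x / e) < dc.
  have -> : rho y / e - rho x / e = (rho y - rho x) / e by field; lra.
  rewrite /Rdiv Rabs_mult Rabs_inv.
  rewrite (Rabs_right e); last lra.
  apply: (Rmult_lt_reg_r e) => //.
  have -> : Rabs (rho y - rho x) * / e * e = Rabs (rho y - rho x) by field; lra.
  apply: Rle_lt_trans (hlip y hy1) _.
  have : C * v < C * (dc * e / C) by apply: Rmult_lt_compat_l; lra.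
  have -> : C * (dc * e / C) = dc * e by field; lra.
  done.
have hc := hcos _ hba.
apply: Rle_lt_trans (norm_le _ (c := L * v + eta * Mr) _ _) _.
- nra.
- move=> i; change (Rabs (cos (rho y / e) * Drho y i - cos (rho x / e) * Drho x i) <= L * v + eta * Mr).
  have -> : cos (rho y / e) * Drho y i - cos (rho x / e) * Drho x i
     = cos (rho y / e) * (Drho y i - Drho x i) + (cos (rho y / e) - cos (rho x / e)) * Drho x i by ring.
  apply: Rle_trans (Rabs_triang _ _) _; rewrite !Rabs_mult.
  have hcb : Rabs (cos (rho y / e)) <= 1 by have := COS_bound (rho y / e); split_Rabs; lra.
  have h1 := coord_sub (Drho y) (Drho x) i; have h2 := hLip y x; rewrite -/v in h2.
  have h3 := coord_le (Drho x) i; have h4 := hMr x.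
  have A1 : Rabs (cos (rho y / e)) * Rabs (Drho y i - Drho x i) <= 1 * Rabs (Drho y i - Drho x i).
    apply: Rmult_le_compat_r => //; exact: Rabs_pos.
  have A2 : Rabs (cos (rho y / e) - cos (rho x / e)) * Rabs (Drho x i) <= eta * Mr.
    apply: Rmult_le_compat; try exact: Rabs_pos; lra.
  lra.
- rewrite -/s.
  have h1 : s * (L * v) <= eps / 2.
    have : s * L * v <= s * L * d2 by apply: Rmult_le_compat_l; nra.
    have : s * L * d2 <= eps / 2.
      rewrite /d2; have -> : s * L * (eps / (2 * (s * L + 1))) = eps / 2 * (s * L / (s * L + 1)) by field; nra.
      have : s * L / (s * L + 1) <= 1.
        apply: (Rmult_le_reg_r (s * L + 1)); first nra.
        rewrite /Rdiv Rmult_assoc Rinv_l; nra.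
      nra.
    nra.
  have h2 : s * (eta * Mr) < eps / 2.
    rewrite /eta; have -> : s * (eps / (2 * (s * Mr + 1)) * Mr) = eps / 2 * (s * Mr / (s * Mr + 1)) by field; nra.
    have : s * Mr / (s * Mr + 1) < 1.
      apply: (Rmult_lt_reg_r (s * Mr + 1)); first nra.
      rewrite /Rdiv Rmult_assoc Rinv_l; nra.
    nra.
  nra.
Qed.

Lemma phi_C1g d (x0 : Rd d) (rho : Rd d -> R) (Drho : Rd d -> Rd d) (A lam K T : R) :
  0 <= A -> 0 <= lam -> (forall x, has_grad rho x (Drho x)) ->
  (forall x eps, 0 < eps -> exists del, 0 < del /\ forall y, vnorm (vsub y x) < del ->
    vnorm (vsub (Drho y) (Drho x)) < eps) ->
  Defs.C1 (fun t x => A * dot (vsub x x0) (vsub x x0) + lam * rho x + K * (T - t))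
     (fun _ _ => - K) (fun _ x i => A * (2 * (x i - x0 i)) + lam * Drho x i).
Proof.
move=> hA hl hg hDc; split.
  move=> t0 xa eps he.
  pose e1 := eps / (2 * (lam + 1)); pose e2 := eps / (2 * (A + 1)).
  have he1 : 0 < e1 by apply: Rdiv_lt_0_compat; lra.
  have he2 : 0 < e2 by apply: Rdiv_lt_0_compat; lra.
  have [del [hdel hd]] := hg xa e1 he1.
  exists (Rmin del e2); split; first exact: Rmin_glb_lt.
  move=> t x [ht hx].
  have hx1 := Rlt_le_trans _ _ _ hx (Rmin_l del e2).
  have hx2 := Rlt_le_trans _ _ _ hx (Rmin_r del e2).
  have hR := hd x hx1.
  have -> : dot (fun i => A * (2 * (xa i - x0 i)) + lam * Drho xa i) (vsub x xa)
     = A * dot (fun i => 2 * (xa i - x0 i)) (vsub x xa) + lam * dot (Drho xa) (vsub x xa).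
    exact: dot_lin2.
  have hq := quad_id x0 xa x; rewrite -(vnorm_sq (vsub x xa)) in hq.
  have hv := vnorm_nonneg (vsub x xa).
  set v := vnorm (vsub x xa) in hq hv hx1 hx2 hR *.
  set Rr := rho x - rho xa - dot (Drho xa) (vsub x xa) in hR.
  have -> : A * dot (vsub x x0) (vsub x x0) + lam * rho x + K * (T - t) -
      (A * dot (vsub xa x0) (vsub xa x0) + lam * rho xa + K * (T - t0)) - - K * (t - t0) -
      (A * dot (fun i => 2 * (xa i - x0 i)) (vsub x xa) + lam * dot (Drho xa) (vsub x xa))
      = A * (v * v) + lam * Rr.
    rewrite -hq /Rr; ring.
  have h1 : A * (v * v) <= eps / 2 * v.
    have : A * v <= A * e2 by apply: Rmult_le_compat_l; lra.
    have : A * e2 <= eps / 2.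
      rewrite /e2; have -> : A * (eps / (2 * (A + 1))) = eps / 2 * (A / (A + 1)) by field; lra.
      have : A / (A + 1) <= 1.
        have : 0 < A + 1 by lra.
        move=> h; apply: (Rmult_le_reg_r (A + 1)) => //; rewrite /Rdiv Rmult_assoc Rinv_l; lra.
      have : 0 <= eps / 2 by lra.
      nra.
    nra.
  have h2 : lam * Rabs Rr <= eps / 2 * v.
    have : lam * Rabs Rr <= lam * (e1 * v) by apply: Rmult_le_compat_l.
    have : lam * e1 <= eps / 2.
      rewrite /e1; have -> : lam * (eps / (2 * (lam + 1))) = eps / 2 * (lam / (lam + 1)) by field; lra.
      have : lam / (lam + 1) <= 1.
        have : 0 < lam + 1 by lra.
        move=> h; apply: (Rmult_le_reg_r (lam + 1)) => //; rewrite /Rdiv Rmult_assoc Rinv_l; lra.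
      have : 0 <= eps / 2 by lra.
      nra.
    nra.
  have hab := Rabs_pos (t - t0).
  have : Rabs (A * (v * v) + lam * Rr) <= A * (v * v) + lam * Rabs Rr.
    apply: Rle_trans (Rabs_triang _ _) _.
    have hAv : 0 <= A * (v * v) by nra.
    rewrite (Rabs_right (A * (v * v))); last lra.
    rewrite Rabs_mult (Rabs_right lam); last lra.
    lra.
  nra.
move=> t0 xa eps he.
set s := sqrt (INR d).
have hs : 0 <= s := sqrt_pos _.
pose e2 := eps / (2 * (s * lam + 1)).
have he2 : 0 < e2 by apply: Rdiv_lt_0_compat; nra.
have [dl [hdl hD]] := hDc xa e2 he2.
pose e3 := eps / (2 * (2 * A * s + 1)).
have he3 : 0 < e3 by apply: Rdiv_lt_0_compat; nra.
exists (Rmin dl e3); split; first exact: Rmin_glb_lt.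
move=> t x [ht hx]; split; first by rewrite Rminus_diag Rabs_R0.
have hx1 := Rlt_le_trans _ _ _ hx (Rmin_l dl e3).
have hx2 := Rlt_le_trans _ _ _ hx (Rmin_r dl e3).
have hv := vnorm_nonneg (vsub x xa).
have hDD := hD x hx1.
apply: Rle_lt_trans (norm_le _ (c := 2 * A * vnorm (vsub x xa) + lam * e2) _ _) _.
- nra.
- move=> i; change (Rabs ((A * (2 * (x i - x0 i)) + lam * Drho x i) - (A * (2 * (xa i - x0 i)) + lam * Drho xa i)) <= 2 * A * vnorm (vsub x xa) + lam * e2).
  have h1 := coord_sub x xa i.
  have h2 := coord_sub (Drho x) (Drho xa) i.
  have -> : (A * (2 * (x i - x0 i)) + lam * Drho x i) - (A * (2 * (xa i - x0 i)) + lam * Drho xa i)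
     = (2 * A) * (x i - xa i) + lam * (Drho x i - Drho xa i) by ring.
  apply: Rle_trans (Rabs_triang _ _) _.
  rewrite (Rabs_mult (2 * A)) (Rabs_mult lam) (Rabs_right (2 * A)); last lra.
  rewrite (Rabs_right lam); last lra.
  have : 2 * A * Rabs (x i - xa i) <= 2 * A * vnorm (vsub x xa) by apply: Rmult_le_compat_l; lra.
  have : lam * Rabs (Drho x i - Drho xa i) <= lam * e2 by apply: Rmult_le_compat_l; lra.
  lra.
- rewrite -/s.
  have h1 : s * (2 * A * vnorm (vsub x xa)) <= eps / 2.
    have : 2 * A * s * vnorm (vsub x xa) <= 2 * A * s * e3 by apply: Rmult_le_compat_l; nra.
    have : 2 * A * s * e3 <= eps / 2.
      rewrite /e3; have -> : 2 * A * s * (eps / (2 * (2 * A * s + 1))) = eps / 2 * (2 * A * s / (2 * A * s + 1)) by field; nra.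
      have : 2 * A * s / (2 * A * s + 1) <= 1.
        apply: (Rmult_le_reg_r (2 * A * s + 1)); first nra.
        rewrite /Rdiv Rmult_assoc Rinv_l; nra.
      nra.
    nra.
  have h2 : s * (lam * e2) < eps / 2.
    rewrite /e2; have -> : s * (lam * (eps / (2 * (s * lam + 1)))) = eps / 2 * (s * lam / (s * lam + 1)) by field; nra.
    have : s * lam / (s * lam + 1) < 1.
      apply: (Rmult_lt_reg_r (s * lam + 1)); first nra.
      rewrite /Rdiv Rmult_assoc Rinv_l; nra.
    nra.
  nra.
Qed.

Unset Implicit Arguments.

Theorem mainTheorem16 (d m : nat) (T : R) (O : Rd d -> Prop) (n gamma : Rd d -> Rd d)
  (c0 : R) (b : R -> Rd d -> Rd d) (sigma : R -> Rd d -> 'I_d -> 'I_m -> R)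
  (psi u : R -> Rd d -> R) :
  0 < T ->
  is_open O -> is_bounded O -> W2inf_domain O n ->
  Lipschitz_vec gamma -> 0 < c0 ->
  (forall x, boundary O x -> c0 <= dot (gamma x) (n x)) ->
  vcont_on T O b -> Lip_x_on T O b ->
  (forall i j, cont_on T O (fun t x => sigma t x i j)) ->
  (exists L, 0 <= L /\ forall t x y i j, inQ T O t x -> inQ T O t y ->
      Rabs (sigma t x i j - sigma t y i j) <= L * vnorm (vsub x y)) ->
  cont_on T O psi ->
  VI_min_subsolution T O gamma b sigma psi u ->
  forall x, closure O x -> u T x <= psi T x.
Proof.
move=> hT hOo hOb [rho [Drho [[[Mr hMr] [hg [hLip [hOrho hnz]]]] hn]]] hgL hc0 hgn hbc _ _ _ hpsic
  [[Mu hMu] [husc htest]] x0 hx0.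
apply: Rnot_lt_le => hlt.
set del := u T x0 - psi T x0.
have hdel : 0 < del by rewrite /del; lra.
have hQ0 : inQ T O T x0 by split; [lra|].
have hMu0 : 0 <= Mu by have := hMu _ _ hQ0; have := Rabs_pos (u T x0); lra.
have rho_le : forall x, closure O x -> rho x <= 0.
  move=> x; exact: rho_closure hg hOrho.
set s := sqrt (INR d).
have hs : 0 <= s := sqrt_pos _.
have [r0 [hr0 [hr01 hkey]]] : exists r0, 0 < r0 /\ r0 <= 1 /\ forall A, 0 <= A -> exists lam,
    0 <= lam /\ lam * rho x0 = 0 /\ forall x1, vnorm (vsub x1 x0) < r0 -> boundary O x1 ->
      0 < dot (fun i => A * (2 * (x1 i - x0 i)) + lam * Drho x1 i) (gamma x1).
  case: (classic (O x0)) => hO0.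
    have [rO [hrO hball]] := hOo x0 hO0.
    exists (Rmin rO 1); split; first by apply: Rmin_glb_lt; lra.
    split; first exact: Rmin_r.
    move=> A hA; exists 0; split; first lra; split; first ring.
    move=> x1 hx1 [_ hn1]; exfalso; apply: hn1; apply: hball.
    exact: Rlt_le_trans hx1 (Rmin_l _ _).
  have hr0 : rho x0 = 0.
    have := rho_le x0 hx0; have : ~ rho x0 < 0 by move=> h; apply: hO0; apply/hOrho.
    lra.
  have hD0 := hnz x0 hr0.
  have [r0 [hr0' [hr01 hk]]] := @key_bd d O n gamma c0 Drho x0 hgL hc0 hgn hn hLip hD0.
  exists r0; split => //; split => //.
  move=> A hA; have [lam [hl hl2]] := hk A hA.
  exists lam; split => //; split => //; rewrite hr0; ring.
have [rp [hrp hp]] := hpsic T x0 hQ0 (del / 3) ltac:(lra).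
have [rb [hrb hb]] : exists r, 0 < r /\ forall i t x, inQ T O t x -> near r T x0 t x ->
    Rabs (b t x i - b T x0 i) < 1.
  have := @fin_rad d (fun i r => forall t x, inQ T O t x -> near r T x0 t x ->
    Rabs (b t x i - b T x0 i) < 1).
  case.
  - move=> i r r' h hr' hle t x hQ [h1 h2]; apply: h => //; split; lra.
  - move=> i; exact: (hbc i T x0 hQ0 1 Rlt_0_1).
  move=> r [hr h]; exists r; split => // i; exact: h.
pose Bb := vnorm (b T x0) + 1.
have hBb : 0 <= Bb by rewrite /Bb; have := vnorm_nonneg (b T x0); lra.
pose r := Rmin (Rmin rp rb) r0.
have hr : 0 < r by rewrite /r; repeat apply: Rmin_glb_lt.
have hrp' : r <= rp by rewrite /r; apply: Rle_trans (Rmin_l _ _) (Rmin_l _ _).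
have hrb' : r <= rb by rewrite /r; apply: Rle_trans (Rmin_l _ _) (Rmin_r _ _).
have hr0' : r <= r0 by exact: Rmin_r.
pose A := (2 * Mu + 2) / (r * r).
have hA : 0 < A by apply: Rdiv_lt_0_compat; nra.
have hAr : A * (r * r) = 2 * Mu + 2 by rewrite /A; field; lra.
have [lam [hlam [hlr hkey2]]] := hkey A (Rlt_le _ _ hA).
have hMr0 : 0 <= Mr by have := hMr x0; have := Rabs_pos (rho x0); lra.
have hMrD : forall x, vnorm (Drho x) <= Mr by move=> x; case: (hMr x).
pose m3 := Rmin 1 (del / 3).
have hm3 : 0 < m3 by apply: Rmin_glb_lt; lra.
pose ee := m3 / (lam + 1).
have hee : 0 < ee by apply: Rdiv_lt_0_compat; lra.
have hlee : lam * ee <= m3.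
  rewrite /ee; have -> : lam * (m3 / (lam + 1)) = m3 - m3 / (lam + 1) by field; lra.
  have : 0 < m3 / (lam + 1) by apply: Rdiv_lt_0_compat; lra.
  lra.
have hm31 : m3 <= 1 := Rmin_l _ _.
have hm32 : m3 <= del / 3 := Rmin_r _ _.
pose G := fun y => ee * sin (rho y / ee).
pose DG := fun x (i : 'I_d) => cos (rho x / ee) * Drho x i.
have hGb : forall x, Rabs (lam * G x) <= lam * ee.
  move=> x; rewrite /G Rabs_mult (Rabs_right lam); last lra.
  apply: Rmult_le_compat_l => //.
  rewrite Rabs_mult (Rabs_right ee); last lra.
  have := SIN_bound (rho x / ee).
  move=> hsb; have : Rabs (sin (rho x / ee)) <= 1 by split_Rabs; lra.
  move=> h; have := Rmult_le_compat_l ee _ _ (Rlt_le _ _ hee) h; lra.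
pose K := (2 * Mu + 2) / r + INR d * (s * Bb) * (s * (2 * A + lam * Mr)) + 1.
have hK1 : 0 <= INR d * (s * Bb) * (s * (2 * A + lam * Mr)).
  apply: Rmult_le_pos; first (apply: Rmult_le_pos; [exact: pos_INR | nra]).
  apply: Rmult_le_pos => //; nra.
have hK2 : 0 < (2 * Mu + 2) / r by apply: Rdiv_lt_0_compat; lra.
have hKr : (2 * Mu + 2) / r * r = 2 * Mu + 2 by field; lra.
have hK : 0 < K by rewrite /K; lra.
pose phi := fun t x => A * dot (vsub x x0) (vsub x x0) + lam * G x + K * (T - t).
pose phit := fun (_ : R) (_ : Rd d) => - K.
pose Dphi := fun (_ : R) (x : Rd d) (i : 'I_d) => A * (2 * (x i - x0 i)) + lam * DG x i.
have hC1 : Defs.C1 phi phit Dphi :=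
  @phi_C1g d x0 G DG A lam K T (Rlt_le _ _ hA) hlam (@G_grad d rho Drho ee hee hg) (@G_cont d rho Drho ee Mr hee hg hLip hMrD).
have husc2 : usc_on T O (fun t x => u t x - phi t x).
  move=> t1 x1 hQ1 eps he.
  have [r1 [hr1 h1]] := husc t1 x1 hQ1 (eps / 2) ltac:(lra).
  have [r2 [hr2 h2]] := C1_cont hC1 (eps := eps / 2) t1 x1 ltac:(lra).
  exists (Rmin r1 r2); split; first exact: Rmin_glb_lt.
  move=> t x hQ [ht hx].
  have := h1 t x hQ (conj (Rlt_le_trans _ _ _ ht (Rmin_l _ _)) (Rlt_le_trans _ _ _ hx (Rmin_l _ _))).
  have := h2 t x (conj (Rlt_le_trans _ _ _ ht (Rmin_r _ _)) (Rlt_le_trans _ _ _ hx (Rmin_r _ _))).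
  split_Rabs; lra.
have hfb : forall t x, inQ T O t x -> u t x - phi t x <= Mu + lam * ee.
  move=> t x [[ht1 ht2] hcl].
  have := hMu t x (conj (conj ht1 ht2) hcl); have := dot_nonneg (vsub x x0).
  have := hGb x; rewrite /phi => h0 h1 h2.
  have : 0 <= K * (T - t) by nra.
  have : 0 <= A * dot (vsub x x0) (vsub x x0) by nra.
  move: h0 h2; split_Rabs; lra.
have [t1 [x1 [hQ1 hmax]]] := max_exists hOb hQ0 husc2 hfb.
case: (hQ1) => [[ht1a ht1b] hcl1].
have hloc : loc_max T O (fun t x => u t x - phi t x) t1 x1.
  split => //; exists 1; split; first lra.
  by move=> t x hQ _; apply: hmax.
have := htest phi phit Dphi hC1 t1 x1 hloc; cbv zeta => [[hint hbnd]].
have hm0 := hmax T x0 hQ0.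
have hrho1 := rho_le x1 hcl1.
have hq1 := vnorm_sq (vsub x1 x0).
have hv1 := vnorm_nonneg (vsub x1 x0).
have hu1 := hMu t1 x1 hQ1; have hu0 := hMu T x0 hQ0.
rewrite /phi dot_zero in hm0.
have hG0 : lam * G x0 = 0.
  case: (Rmult_integral _ _ hlr) => [->|h0]; first ring.
  by rewrite /G h0 /Rdiv Rmult_0_l sin_0; ring.
have hG1 := hGb x1.
have hineq : A * (vnorm (vsub x1 x0) * vnorm (vsub x1 x0)) + K * (T - t1) <= u t1 x1 - u T x0 + lam * ee.
  rewrite hq1.
  move: hm0 hG1; rewrite Rminus_diag !Rmult_0_r hG0; split_Rabs; lra.
have hineq2 : u t1 x1 - u T x0 <= 2 * Mu by move: hu1 hu0; split_Rabs; lra.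
have hK0 : 0 <= K * (T - t1) by nra.
have hA0 : 0 <= A * (vnorm (vsub x1 x0) * vnorm (vsub x1 x0)) by nra.
have hu10 : u T x0 - del / 3 <= u t1 x1 by lra.
have hx1r : vnorm (vsub x1 x0) < r.
  apply: Rnot_le_lt => hge.
  have : A * (r * r) <= A * (vnorm (vsub x1 x0) * vnorm (vsub x1 x0)).
    apply: Rmult_le_compat_l; [lra | apply: Rmult_le_compat; lra].
  lra.
have ht1r : T - t1 < r.
  apply: Rnot_le_lt => hge.
  have : (2 * Mu + 2) / r * r <= K * (T - t1).
    apply: Rmult_le_compat; try lra.
    rewrite /K; lra.
  lra.
have hnear : forall r', r <= r' -> near r' T x0 t1 x1.
  move=> r' hr'; split; last lra.
  rewrite Rabs_left1; lra.
have hps := hp t1 x1 hQ1 (hnear _ hrp').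
have hbb := hb _ t1 x1 hQ1 (hnear _ hrb').
have hE : 0 < Eop b sigma psi t1 x1 (u t1 x1) (phit t1 x1) (Dphi t1 x1).
  rewrite /Eop; apply: Rmin_glb_lt; last by have hdl : del = u T x0 - psi T x0 by []; move: hps; split_Rabs; lra.
  have hH := @Ham_lb d m b sigma t1 x1 (Dphi t1 x1).
  have hbn : vnorm (b t1 x1) <= s * Bb.
    apply: norm_le => // i; have := hbb i; have := coord_le (b T x0) i.
    rewrite /Bb; split_Rabs; lra.
  have hpn : vnorm (Dphi t1 x1) <= s * (2 * A + lam * Mr).
    apply: norm_le; first nra.
    move=> i; rewrite /Dphi /DG.
    have := coord_sub x1 x0 i; have := coord_le (Drho x1) i; have := hMr x1.
    move=> [_ hm] h1 h2.
    apply: Rle_trans (Rabs_triang _ _) _.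
    rewrite (Rabs_mult A) (Rabs_mult lam) (Rabs_mult 2) (Rabs_mult (cos _)) (Rabs_right A); last lra.
    rewrite (Rabs_right lam); last lra.
    rewrite (Rabs_right 2); last lra.
    have hc : Rabs (cos (rho x1 / ee)) <= 1 by have := COS_bound (rho x1 / ee); split_Rabs; lra.
    have : Rabs (cos (rho x1 / ee)) * Rabs (Drho x1 i) <= Mr.
      have := Rabs_pos (cos (rho x1 / ee)); have := Rabs_pos (Drho x1 i); nra.
    have : Rabs (x1 i - x0 i) <= 1 by lra.
    nra.
  have : INR d * (vnorm (b t1 x1) * vnorm (Dphi t1 x1)) <= INR d * (s * Bb) * (s * (2 * A + lam * Mr)).
    rewrite Rmult_assoc; apply: Rmult_le_compat_l; first exact: pos_INR.
    apply: Rmult_le_compat => //; exact: vnorm_nonneg.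
  rewrite /phit /K; lra.
case: (classic (O x1)) => hO1.
  have := hint hO1; lra.
have := hbnd (conj hcl1 hO1).
have := hkey2 x1 (Rlt_le_trans _ _ _ hx1r hr0') (conj hcl1 hO1).
move=> hdot hmin.
have hrho0 : rho x1 = 0.
  have : ~ rho x1 < 0 by move=> h; apply: hO1; apply/hOrho.
  lra.
have hdd : dot (Dphi t1 x1) (gamma x1) = dot (fun i => A * (2 * (x1 i - x0 i)) + lam * Drho x1 i) (gamma x1).
  rewrite /dot; apply: sum_ext => i; rewrite /Dphi /DG hrho0 /Rdiv Rmult_0_l cos_0; ring.
rewrite -hdd in hdot.
have := Rmin_glb_lt _ _ _ hE hdot; lra.
Qed.
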